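(* In the Poisson matching problem $PM(\lambda,\mu)$ (defined in the context), for any blue points $b_1,b_2\in\mathcal{B}$, if $\mathcal{P}(b_1)\cap\mathcal{P}(b_2)\neq\emptyset$ then $\mathcal{P}(b_1)=\mathcal{P}(b_2)$.
   Context: Poisson matching problem $PM(\lambda,\mu)$, $0<\lambda\le\mu$: $\mathcal{B}$ (blue points) and $\mathcal{R}$ (red points) are independent homogeneous Poisson point processes on $\mathbb{R}$ of intensities $\lambda$ and $\mu$ respectively; $\mathcal{S}=\mathcal{B}\cup\mathcal{R}$. A matching is a map $\mathcal{M}:\mathcal{S}\to\mathcal{S}\cup\{\infty\}$ with $\mathcal{M}(r)\in\mathcal{B}\cup\{\infty\}$ for red $r$, $\mathcal{M}(b)\in\mathcal{R}\cup\{\infty\}$ for blue $b$, and $\mathcal{M}(r)=b$ iff $\mathcal{M}(b)=r$. The matching segment $I_\mathcal{M}(x)$ is the open interval with endpoints $x$ and $\mathcal{M}(x)$ ($(x,\infty)$ if $x$ is unmatched). $\mathcal{M}$ is nested if for all $x,y\in\mathcal{S}$, $x\in I_\mathcal{M}(y)$ implies $\mathcal{M}(x)$ lies in the closure of $I_\mathcal{M}(y)$. For $b\in\mathcal{B}$, the set of potential matches of $b$ is $\mathcal{P}(b)=\{r\in\mathcal{R}:\text{there is a nested matching }\mathcal{M}\text{ with }\mathcal{M}(b)=r\}$. *)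

(* Defs.v *)
From HB Require Import structures.
From mathcomp Require Import all_boot all_order all_algebra.
From mathcomp Require Import all_classical all_reals all_analysis.
Set Implicit Arguments.
Unset Strict Implicit.
Unset Printing Implicit Defensive.
Import Order.TTheory GRing.Theory Num.Theory.
Local Open Scope classical_set_scope.
Local Open Scope ring_scope.

(* A matching is a map  M : R -> option R  where [None] stands for the point
   at infinity (x unmatched). Only its values on S = Bs `|` Rs matter. *)

Definition is_matching {R : realType} (Bs Rs : set R) (M : R -> option R) : Prop :=
  (forall r, Rs r -> forall y, M r = Some y -> Bs y) /\
  (forall b, Bs b -> forall y, M b = Some y -> Rs y) /\
  (forall r b, Rs r -> Bs b -> (M r = Some b <-> M b = Some r)).

Definition seg {R : realType} (M : R -> option R) (x : R) : set R :=
  match M x with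
  | Some y => [set z | Num.min x y < z < Num.max x y]
  | None => [set z | x < z]
  end.

(* "M(x) lies in the closure of I_M(y)", the closure being taken in
   R \cup {oo}: [min, max] for a bounded segment, [y, oo] for (y, oo). *)
Definition in_closure_seg {R : realType} (M : R -> option R) (y : R)
    (v : option R) : Prop :=
  match M y, v with
  | Some y', Some w => Num.min y y' <= w <= Num.max y y'
  | Some _, None => False
  | None, Some w => y <= w
  | None, None => True
  end.

Definition is_nested {R : realType} (Bs Rs : set R) (M : R -> option R) : Prop :=
  forall x y, (Bs `|` Rs) x -> (Bs `|` Rs) y ->
    seg M y x -> in_closure_seg M y (M x).

Definition nested_matching {R : realType} (Bs Rs : set R) (M : R -> option R) : Prop :=
  is_matching Bs Rs M /\ is_nested Bs Rs M.

Definition potential_matches {R : realType} (Bs Rs : set R) (b : R) : set R :=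
  [set r | Rs r /\ exists M, nested_matching Bs Rs M /\ M b = Some r].

Definition npoints {R : realType} (X : set R) (A : set R) : \bar R :=
  (\esum_(x in X `&` A) 1%E)%E.

Definition pois_pmf {R : realType} (m : R) (k : nat) : R :=
  expR (- m) * m ^+ k / k`!%:R.

Definition fin_borel {R : realType} (A : set R) : Prop :=
  measurable A /\ (lebesgue_measure A < +oo)%E.

Definition count_event {d} {T : measurableType d} {R : realType}
    (X : T -> set R) (A : set R) (k : nat) : set T :=
  [set w | npoints (X w) A = (k%:R)%:E].

Definition count_events {d} {T : measurableType d} {R : realType}
    (X : T -> set R) (n : nat) (A : nat -> set R) (k : nat -> nat) : set T :=
  [set w | forall i, (i < n)%N -> npoints (X w) (A i) = ((k i)%:R)%:E].

Definition poisson_process {d} {T : measurableType d} {R : realType}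
    (P : probability T R) (lam : R) (X : T -> set R) : Prop :=
  (forall A k, fin_borel A -> measurable (count_event X A k)) /\
  (forall A k, fin_borel A ->
     P (count_event X A k) = (pois_pmf (lam * fine (lebesgue_measure A)) k)%:E) /\
  (forall n (A : nat -> set R) (k : nat -> nat),
     (forall i, (i < n)%N -> fin_borel (A i)) ->
     (forall i j, (i < n)%N -> (j < n)%N -> i <> j -> A i `&` A j = set0) ->
     P (count_events X n A k) = (\prod_(i < n) P (count_event X (A i) (k i)))%E).

(* independence of two point processes (product rule on the generating
   pi-systems of their sigma-algebras) *)
Definition indep_processes {d} {T : measurableType d} {R : realType}
    (P : probability T R) (X Y : T -> set R) : Prop :=
  forall n m (A C : nat -> set R) (k l : nat -> nat),
    (forall i, (i < n)%N -> fin_borel (A i)) ->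
    (forall j, (j < m)%N -> fin_borel (C j)) ->
    P (count_events X n A k `&` count_events Y m C l) =
      (P (count_events X n A k) * P (count_events Y m C l))%E.

(* Main.v *)
Require Import Defs.
From HB Require Import structures.
From mathcomp Require Import all_boot all_order all_algebra.
From mathcomp Require Import all_classical all_reals all_analysis.
From mathcomp Require Import finmap ring lra zify.
Import Order.TTheory GRing.Theory Num.Theory.
Local Open Scope classical_set_scope.
Local Open Scope ring_scope.
Section Det.
Context {R : realType}.
Implicit Types (Bs Rs A B : set R).

Lemma betweenP (a c z : R) :
  (Num.min a c < z < Num.max a c) <-> ((a < z < c) \/ (c < z < a)).
Proof.
case: (boolP (a <= c)) => h.
  rewrite minEle maxEle h; split; first by left.
  by case=> /andP[h1 h2]//; apply/andP; split; lra.
rewrite minEle maxEle (negbTE h); rewrite -ltNge in h; split; first by right.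
by case=> /andP[h1 h2]//; apply/andP; split; lra.
Qed.

Lemma closedP (a c z : R) :
  (Num.min a c <= z <= Num.max a c) <-> ((a <= z <= c) \/ (c <= z <= a)).
Proof.
case: (boolP (a <= c)) => h.
  rewrite minEle maxEle h; split; first by left.
  by case=> /andP[h1 h2]//; apply/andP; split; lra.
rewrite minEle maxEle (negbTE h); rewrite -ltNge in h; split; first by right.
by case=> /andP[h1 h2]//; apply/andP; split; lra.
Qed.

Definition cnt (A : set R) : nat := #|` fset_set A|.

Lemma cnt0 : cnt set0 = 0%N.
Proof. by rewrite /cnt fset_set0 cardfs0. Qed.

Lemma cnt1 x : cnt [set x] = 1%N.
Proof. by rewrite /cnt fset_set1 cardfs1. Qed.

Lemma cntU A B : finite_set A -> finite_set B -> A `&` B = set0 ->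
  cnt (A `|` B) = (cnt A + cnt B)%N.
Proof.
move=> fA fB AB; rewrite /cnt fset_setU // -cardfsUI.
by rewrite -fset_setI // AB fset_set0 cardfs0 addn0.
Qed.

Lemma cnt_le A B : finite_set B -> A `<=` B -> (cnt A <= cnt B)%N.
Proof.
move=> fB AB; have fA := sub_finite_set AB fB.
by rewrite /cnt; apply: fsubset_leq_card; rewrite -fset_set_sub.
Qed.

Lemma cnt_inj A B (f : R -> R) : finite_set A -> finite_set B ->
  (forall x, A x -> B (f x)) -> (forall x y, A x -> A y -> f x = f y -> x = y) ->
  (cnt A <= cnt B)%N.
Proof.
move=> fA fB fAB finj.
have -> : cnt A = cnt (f @` A).
  rewrite /cnt fset_set_image // card_in_imfset //= => x y.
  by rewrite !in_fset_set // => /set_mem Ax /set_mem Ay; apply: finj.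
by apply: cnt_le => // _ [x Ax <-]; apply: fAB.
Qed.


Definition disj Bs Rs := forall x, Bs x -> Rs x -> False.
Definition oi (a c : R) := [set z : R | Num.min a c < z < Num.max a c].

Lemma oi_sym a c : oi a c = oi c a.
Proof. by apply/seteqP; split => z; rewrite /oi /= !betweenP; tauto. Qed.

Lemma oi_end a c : ~ oi a c a.
Proof. by rewrite /oi /= betweenP; case=> /andP[h1 h2]; lra. Qed.

Arguments oi_end {a c}.

Lemma strict3 (a w c : R) : a <= w <= c -> w <> a -> w <> c -> a < w < c.
Proof.
move=> /andP[h1 h2] n1 n2; rewrite !lt_neqAle h1 h2 !andbT.
apply/andP; split; apply/eqP => e; [by apply: n1|by apply: n2].
Qed.

Lemma matched_inside Bs Rs M b r z : disj Bs Rs -> Bs b -> Rs r ->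
  nested_matching Bs Rs M -> M b = Some r -> (Bs `|` Rs) z -> oi b r z ->
  exists w, M z = Some w /\ oi b r w /\ (Bs z -> Rs w) /\ (Rs z -> Bs w).
Proof.
move=> dj Bb Rr [[m1 [m2 m3]] nest] Mb Sz oz.
have := nest z b Sz (or_introl Bb).
rewrite /seg /in_closure_seg Mb => /(_ oz).
case Mz: (M z) => [w|] // hw.
have Mr : M r = Some b by apply/(m3 r b Rr Bb).
have zb : z <> b by move=> e; subst z; exact: (oi_end oz).
have zr : z <> r by move=> e; subst z; rewrite oi_sym in oz; exact: (oi_end oz).
have wb : w <> b.
  move=> e; subst w; case: Sz => [Bz|Rz].
    by apply: (dj b) => //; apply: (m2 z Bz).
  by move: (proj1 (m3 z b Rz Bb) Mz); rewrite Mb => -[/esym /zr].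
have wr : w <> r.
  move=> e; subst w; case: Sz => [Bz|Rz].
    by move: (proj2 (m3 r z Rr Bz) Mz); rewrite Mr => -[/esym /zb].
  by apply: (dj r) => //; apply: (m1 z Rz).
exists w; split => //; split; last by split => [Bz|Rz]; [apply: (m2 z Bz)|apply: (m1 z Rz)].
rewrite /oi /= betweenP; move: hw; rewrite closedP => -[h|h].
  by left; apply: strict3.
by right; apply: strict3.
Qed.

Lemma pm_balanced Bs Rs M b r : disj Bs Rs -> Bs b -> Rs r ->
  finite_set (Bs `&` oi b r) -> finite_set (Rs `&` oi b r) ->
  nested_matching Bs Rs M -> M b = Some r ->
  cnt (Bs `&` oi b r) = cnt (Rs `&` oi b r).
Proof.
move=> dj Bb Rr fB fR nm Mb.
have [[m1 [m2 m3]] _] := nm.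
pose f z := if M z is Some w then w else z.
have H z := @matched_inside Bs Rs M b r z dj Bb Rr nm Mb.
apply/eqP; rewrite eqn_leq; apply/andP; split.
- apply: (@cnt_inj _ _ f) => //.
    move=> z [Bz oz]; have [w [Mz [ow [h1 _]]]] := H z (or_introl Bz) oz.
    by rewrite /f Mz; split => //; apply: h1.
  move=> z1 z2 [Bz1 oz1] [Bz2 oz2].
  have [w1 [M1 [_ [h1 _]]]] := H z1 (or_introl Bz1) oz1.
  have [w2 [M2 [_ [h2 _]]]] := H z2 (or_introl Bz2) oz2.
  rewrite /f M1 M2 => e; subst w2.
  have := proj2 (m3 w1 z1 (h1 Bz1) Bz1) M1.
  by rewrite (proj2 (m3 w1 z2 (h1 Bz1) Bz2) M2) => -[].
- apply: (@cnt_inj _ _ f) => //.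
    move=> z [Rz oz]; have [w [Mz [ow [_ h1]]]] := H z (or_intror Rz) oz.
    by rewrite /f Mz; split => //; apply: h1.
  move=> z1 z2 [Rz1 oz1] [Rz2 oz2].
  have [w1 [M1 [_ [_ h1]]]] := H z1 (or_intror Rz1) oz1.
  have [w2 [M2 [_ [_ h2]]]] := H z2 (or_intror Rz2) oz2.
  rewrite /f M1 M2 => e; subst w2.
  have := proj1 (m3 z1 w1 Rz1 (h1 Rz1)) M1.
  by rewrite (proj1 (m3 z2 w1 Rz2 (h1 Rz1)) M2) => -[].
Qed.


Ltac oi_unf := rewrite /oi /= ?betweenP ?closedP.

Lemma oi_convex b r u v p : oi b r u -> oi b r v -> oi u v p -> oi b r p.
Proof.
oi_unf.
case=> /andP[h1 h2]; case=> /andP[h3 h4]; case=> /andP[h5 h6];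
  solve [left; apply/andP; split; lra | right; apply/andP; split; lra | lra].
Qed.
Arguments oi_convex {b r u v p}.


Lemma oi_subr u v z w : oi u v z -> oi z v w -> oi u v w.
Proof.
oi_unf.
case=> /andP[h1 h2]; case=> /andP[h5 h6];
  solve [left; apply/andP; split; lra | right; apply/andP; split; lra | lra].
Qed.
Arguments oi_subr {u v z w}.


Lemma oi_subl u v z w : oi u v z -> oi u z w -> oi u v w.
Proof.
oi_unf.
case=> /andP[h1 h2]; case=> /andP[h5 h6];
  solve [left; apply/andP; split; lra | right; apply/andP; split; lra | lra].
Qed.
Arguments oi_subl {u v z w}.


Lemma closure_adj y y' p q : oi y y' p -> ~ oi p q y -> ~ oi p q y' ->
  Num.min y y' <= q <= Num.max y y'.
Proof.
rewrite closedP; oi_unf => h n1 n2.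
case: h => /andP[h1 h2].
  case: (ltP q y) => qy.
    by exfalso; apply: n1; right; apply/andP; split.
  case: (ltP y' q) => yq.
    by exfalso; apply: n2; left; apply/andP; split.
  by left; apply/andP; split.
case: (ltP q y') => qy.
  by exfalso; apply: n2; right; apply/andP; split.
case: (ltP y q) => yq.
  by exfalso; apply: n1; left; apply/andP; split.
by right; apply/andP; split.
Qed.
Arguments closure_adj {y y' p q}.


Lemma left_adj y p q : y < p -> ~ oi p q y -> y <= q.
Proof.
oi_unf => h n; case: (ltP q y) => qy //.
by exfalso; apply: n; right; apply/andP; split.
Qed.
Arguments left_adj {y p q}.



Lemma cnt_lt A B z : finite_set B -> A `<=` B -> B z -> ~ A z -> (cnt A < cnt B)%N.
Proof.
move=> fB AB Bz nAz; have fA := sub_finite_set AB fB.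
have -> : cnt B = cnt (A `|` [set z] `|` (B `\` (A `|` [set z]))).
  by congr cnt; rewrite setDUK // => x [/AB|->].
rewrite cntU //; last first.
- by apply/seteqP; split => x // [] ? [].
- exact: finite_setD.
- by rewrite finite_setU; split => //; exact: finite_set1.
rewrite cntU //; last by apply/seteqP; split => x // [] ? /= ?; subst x.
  by rewrite cnt1; lia.
Qed.

Lemma cnt_pos A z : finite_set A -> A z -> (0 < cnt A)%N.
Proof.
move=> fA Az; rewrite -cnt0; exact: (@cnt_lt set0 A z fA (@sub0set _ A) Az).
Qed.

Lemma adjacent Bs Rs : forall n u v, cnt ((Bs `|` Rs) `&` oi u v) = n ->
  finite_set ((Bs `|` Rs) `&` oi u v) -> Bs u -> Rs v ->
  exists p q, [/\ Bs p, Rs q, (p = u \/ oi u v p), (q = v \/ oi u v q) &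
    forall z, (Bs `|` Rs) z -> ~ oi p q z].
Proof.
elim/ltn_ind => n IH u v cn fin Bu Rv.
have [[z [Sz oz]]|none] := pselect (exists z, (Bs `|` Rs) z /\ oi u v z); last first.
  exists u, v; split => //; [by left|by left|].
  by move=> z Sz oz; apply: none; exists z.
have sub1 w : oi u v w -> (Bs `|` Rs) `&` oi w v `<=` (Bs `|` Rs) `&` oi u v.
  by move=> ow x [Sx ox]; split => //; apply: (oi_subr ow).
have sub2 w : oi u v w -> (Bs `|` Rs) `&` oi u w `<=` (Bs `|` Rs) `&` oi u v.
  by move=> ow x [Sx ox]; split => //; apply: (oi_subl ow).
case: (Sz) => [Bz|Rz].
- have fin' := sub_finite_set (sub1 z oz) fin.
  have lt : (cnt ((Bs `|` Rs) `&` oi z v) < n)%N.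
    rewrite -cn; apply: (@cnt_lt _ _ z) => //; first exact: sub1.
    by case=> _ /oi_end.
  have [p [q [Bp Rq hp hq hpq]]] := IH _ lt z v erefl fin' Bz Rv.
  exists p, q; split => //.
    by right; case: hp => [->//|]; apply: oi_subr.
  by case: hq => [->|]; [left|right; apply: (oi_subr oz)].
- have fin' := sub_finite_set (sub2 z oz) fin.
  have lt : (cnt ((Bs `|` Rs) `&` oi u z) < n)%N.
    rewrite -cn; apply: (@cnt_lt _ _ z) => //; first exact: sub2.
    by case=> _; rewrite oi_sym => /oi_end.
  have [p [q [Bp Rq hp hq hpq]]] := IH _ lt u z erefl fin' Bu Rz.
  exists p, q; split => //.
    by case: hp => [->|]; [left|right; apply: (oi_subl oz)].
  by right; case: hq => [->//|]; apply: oi_subl.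
Qed.


Definition ext (M' : R -> option R) (p q : R) : R -> option R :=
  fun x => if x == p then Some q else if x == q then Some p else M' x.

Lemma extend Bs Rs M' p q : disj Bs Rs -> Bs p -> Rs q ->
  (forall z, (Bs `|` Rs) z -> ~ oi p q z) ->
  nested_matching (Bs `\ p) (Rs `\ q) M' ->
  nested_matching Bs Rs (ext M' p q).
Proof.
move=> dj Bp Rq adj [[m1 [m2 m3]] nest'].
have pq : p <> q by move=> e; subst q; exact: (dj p).
have Mp : ext M' p q p = Some q by rewrite /ext eqxx.
have Mq : ext M' p q q = Some p.
  by rewrite /ext eqxx; case: eqP => // e; exfalso; exact: pq.
have Mo x : x <> p -> x <> q -> ext M' p q x = M' x.
  by move=> xp xq; rewrite /ext; case: eqP => // _; case: eqP.
have Rnp x : Rs x -> x <> p by move=> Rx e; subst x; exact: (dj p).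
have Bnq x : Bs x -> x <> q by move=> Bx e; subst x; exact: (dj q).
have vals y0 w : (Bs `\ p `|` Rs `\ q) y0 -> M' y0 = Some w ->
    [/\ (Bs `\ p `|` Rs `\ q) w, (Bs `|` Rs) w, w <> p & w <> q].
  case=> [By0|Ry0] e.
    have [Rw wq] := m2 y0 By0 w e.
    by split => //; [right|right|exact: Rnp].
  have [Bw wp] := m1 y0 Ry0 w e.
  by split => //; [left|left|exact: Bnq].
split; [split; [|split]|].
- move=> r0 Rr0 y; have [->|r0q] := pselect (r0 = q).
    by rewrite Mq => -[<-].
  rewrite Mo //; last exact: Rnp.
  by move=> e; have [] := m1 r0 (conj Rr0 r0q) y e.
- move=> b0 Bb0 y; have [->|b0p] := pselect (b0 = p).
    by rewrite Mp => -[<-].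
  rewrite Mo //; last exact: Bnq.
  by move=> e; have [] := m2 b0 (conj Bb0 b0p) y e.
- move=> r0 b0 Rr0 Bb0.
  have r0p := Rnp _ Rr0; have b0q := Bnq _ Bb0.
  have [e1|r0q] := pselect (r0 = q); have [e2|b0p] := pselect (b0 = p).
  + by subst; rewrite Mq Mp.
  + subst r0; rewrite Mq (Mo b0) //; split => [[e]|e]; first by exfalso; exact: b0p.
    by have [_ /(_ erefl)] := m2 b0 (conj Bb0 b0p) q e.
  + subst b0; rewrite Mp (Mo r0) //; split => [e|[e]]; last by exfalso; exact: r0q.
    by have [_ /(_ erefl)] := m1 r0 (conj Rr0 r0q) p e.
  + by rewrite !Mo //; apply: m3.
- move=> x y Sx Sy.
  have [->|yp] := pselect (y = p).
    by rewrite /seg Mp => ox; exfalso; exact: (adj x Sx ox).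
  have [->|yq] := pselect (y = q).
    by rewrite /seg Mq => ox; exfalso; apply: (adj x Sx); rewrite oi_sym; exact: ox.
  have Sy' : (Bs `\ p `|` Rs `\ q) y by case: Sy => [By|Ry]; [left|right].
  have segE : seg (ext M' p q) y = seg M' y by rewrite /seg Mo.
  have clE v : in_closure_seg (ext M' p q) y v = in_closure_seg M' y v.
    by rewrite /in_closure_seg Mo.
  rewrite segE clE.
  have [->|xp] := pselect (x = p).
    rewrite Mp /seg /in_closure_seg; case My: (M' y) => [y'|] sx.
      have [_ Sy'' _ _] := vals y y' Sy' My.
      exact: (closure_adj sx (adj y Sy) (adj y' Sy'')).
    exact: (left_adj sx (adj y Sy)).
  have [->|xq] := pselect (x = q).
    rewrite Mq /seg /in_closure_seg; case My: (M' y) => [y'|] sx.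
      have [_ Sy'' _ _] := vals y y' Sy' My.
      by apply: (closure_adj sx); rewrite oi_sym; apply: adj.
    by apply: (left_adj sx); rewrite oi_sym; apply: adj.
  rewrite Mo //; apply: nest' => //.
  by case: Sx => [Bx|Rx]; [left|right].
Qed.

Lemma none_nested Bs Rs : nested_matching Bs Rs (fun _ => None).
Proof. by split; [split; [|split]|] => //= x y _ _; rewrite /in_closure_seg. Qed.


Lemma cnt_pos_ex A : (0 < cnt A)%N -> exists z, A z.
Proof.
move=> h; apply: contrapT => nz.
have A0 : A = set0 by apply/seteqP; split => x // Ax; apply: nz; exists x.
by move: h; rewrite A0 cnt0.
Qed.

Lemma build : forall n (Bs Rs : set R) b r, disj Bs Rs -> Bs b -> Rs r ->
  finite_set ((Bs `|` Rs) `&` oi b r) -> cnt ((Bs `|` Rs) `&` oi b r) = n ->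
  cnt (Bs `&` oi b r) = cnt (Rs `&` oi b r) ->
  exists M, nested_matching Bs Rs M /\ M b = Some r.
Proof.
elim/ltn_ind => n IH Bs Rs b r dj Bb Rr fin cn bal.
have br : b <> r by move=> e; subst r; exact: (dj b).
have [[z [Sz oz]]|none] := pselect (exists z, (Bs `|` Rs) z /\ oi b r z); last first.
  exists (ext (fun _ => None) b r); split.
    apply: extend => //.
      by move=> z Sz oz; apply: none; exists z.
  by rewrite /ext /= eqxx.
have finB : finite_set (Bs `&` oi b r).
  by apply: (sub_finite_set _ fin) => x [Bx ox]; split => //; left.
have finR : finite_set (Rs `&` oi b r).
  by apply: (sub_finite_set _ fin) => x [Rx ox]; split => //; right.
have pos : (0 < cnt (Bs `&` oi b r))%N.
  case: Sz => [Bz|Rz]; first exact: (@cnt_pos _ z).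
  by rewrite bal; exact: (@cnt_pos _ z).
have [u [Bu ou]] := @cnt_pos_ex _ pos.
have [v [Rv ov]] : exists v, (Rs `&` oi b r) v by apply: (@cnt_pos_ex (Rs `&` oi b r)); rewrite -bal.
have fin' : finite_set ((Bs `|` Rs) `&` oi u v).
  by apply: (sub_finite_set _ fin) => x [Sx ox]; split => //; exact: (oi_convex ou ov).
have [p [q [Bp Rq hp hq adj]]] := @adjacent Bs Rs _ u v erefl fin' Bu Rv.
have op : oi b r p by case: hp => [->//|]; exact: oi_convex.
have oq : oi b r q by case: hq => [->//|]; exact: oi_convex.
have pq : p <> q by move=> e; subst q; exact: (dj p).
have bp : b <> p by move=> e; subst p; exact: (oi_end op).
have bq : b <> q by move=> e; subst q; exact: (oi_end oq).
have rp : r <> p by move=> e; subst p; rewrite oi_sym in op; exact: (oi_end op).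
have rq : r <> q by move=> e; subst q; rewrite oi_sym in oq; exact: (oi_end oq).
pose Bs' := Bs `\ p; pose Rs' := Rs `\ q.
have dj' : disj Bs' Rs' by move=> x [Bx _] [Rx _]; exact: (dj x).
have finI' : finite_set ((Bs' `|` Rs') `&` oi b r).
  apply: (sub_finite_set _ fin) => x [[[Bx _]|[Rx _]] ox]; split => //; [left|right] => //.
have eI : (Bs `|` Rs) `&` oi b r = ((Bs' `|` Rs') `&` oi b r `|` [set p]) `|` [set q].
  apply/seteqP; split => x.
    move=> [Sx ox]; have [->|xp] := pselect (x = p); first by left; right.
    have [->|xq] := pselect (x = q); first by right.
    by left; left; split => //; case: Sx => [Bx|Rx]; [left|right].
  by case=> [[[[[Bx _]|[Rx _]] ox]|->]|->]; split => //; [left|right|left|right].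
have fin1 : finite_set ((Bs' `|` Rs') `&` oi b r `|` [set p]).
  by rewrite finite_setU; split => //; exact: finite_set1.
have cI : cnt ((Bs `|` Rs) `&` oi b r) = (cnt ((Bs' `|` Rs') `&` oi b r) + 2)%N.
  rewrite eI cntU //; last first.
    apply/seteqP; split => x // [[[[[Bx _]|[_ xq]] _]|xp] /= e].
    - by subst x; exact: (dj q).
    - by exact: xq.
    - by apply: pq; rewrite -xp -e.
  rewrite cntU //; last first.
    apply/seteqP; split => x // [[[[_ xp]|[Rx _]] _] /= e].
    - by exact: xp.
    - by subst x; exact: (dj p).
  by rewrite !cnt1 -addnA.
have eB : Bs `&` oi b r = (Bs' `&` oi b r) `|` [set p].
  apply/seteqP; split => x.
    by move=> [Bx ox]; have [->|xp] := pselect (x = p); [right|left].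
  by case=> [[[Bx _] ox]|->].
have eR : Rs `&` oi b r = (Rs' `&` oi b r) `|` [set q].
  apply/seteqP; split => x.
    by move=> [Rx ox]; have [->|xq] := pselect (x = q); [right|left].
  by case=> [[[Rx _] ox]|->].
have fB' : finite_set (Bs' `&` oi b r).
  by apply: (sub_finite_set _ finI') => x [Bx ox]; split => //; left.
have fR' : finite_set (Rs' `&` oi b r).
  by apply: (sub_finite_set _ finI') => x [Rx ox]; split => //; right.
have bal' : cnt (Bs' `&` oi b r) = cnt (Rs' `&` oi b r).
  move: bal; rewrite eB eR cntU //; last first.
    by apply/seteqP; split => x // [[[_ xp] _] /= e].
  rewrite cntU //; last first.
    by apply/seteqP; split => x // [[[_ xq] _] /= e].
  by rewrite !cnt1 => /eqP; rewrite eqn_add2r => /eqP.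
have lt : (cnt ((Bs' `|` Rs') `&` oi b r) < n)%N by rewrite -cn cI; lia.
have [M' [nm' Mb']] := IH _ lt Bs' Rs' b r dj' (conj Bb bp) (conj Rr rq) finI' erefl bal'.
exists (ext M' p q); split; first exact: extend.
rewrite /ext; case: eqP => // _; case: eqP => // _.
Qed.


Lemma below (a b c d : R) : exists K, [/\ K < a, K < b, K < c & K < d].
Proof.
exists (Num.min (Num.min a b) (Num.min c d) - 1).
have h1 : Num.min (Num.min a b) (Num.min c d) <= a by rewrite !ge_min lexx.
have h2 : Num.min (Num.min a b) (Num.min c d) <= b by rewrite !ge_min lexx !orbT.
have h3 : Num.min (Num.min a b) (Num.min c d) <= c by rewrite !ge_min lexx !orbT.
have h4 : Num.min (Num.min a b) (Num.min c d) <= d by rewrite !ge_min lexx !orbT.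
split; lra.
Qed.

Lemma cnt_split (X : set R) K u v : K < u -> u < v -> finite_set (X `&` oi K v) ->
  cnt (X `&` oi K v) = (cnt (X `&` oi K u) + cnt (X `&` [set u]) + cnt (X `&` oi u v))%N.
Proof.
move=> Ku uv fin.
have e : X `&` oi K v = ((X `&` oi K u) `|` (X `&` [set u])) `|` (X `&` oi u v).
  apply/seteqP; split => x.
    move=> [Xx]; oi_unf; case=> /andP[h1 h2]; last lra.
    case: (ltgtP x u) => [xu|ux|e].
    - by left; left; split => //; oi_unf; left; rewrite ?andbT.
    - by right; split => //; oi_unf; left.
    - by left; right; rewrite -e; split.
  case=> [[[Xx ox]|[Xx /= ex]]|[Xx ox]]; split => //.
  - move: ox; oi_unf; case=> /andP[h1 h2]; last lra.
    by left; apply/andP; split; lra.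
  - by subst x; oi_unf; left; apply/andP; split.
  - move: ox; oi_unf; case=> /andP[h1 h2]; last lra.
    by left; apply/andP; split; lra.
have sub : forall Y, Y `<=` X `&` oi K v -> finite_set Y.
  by move=> Y YS; exact: (sub_finite_set YS fin).
rewrite e cntU; first last.
- apply/seteqP; split => x // [[[_ o1]|[_ /= ex]] [_ o2]].
  + by move: o1 o2; oi_unf; case=> /andP[h1 h2]; case=> /andP[h3 h4]; lra.
  + by subst x; exact: (oi_end o2).
- by apply: sub; rewrite e => x Hx; right.
- by apply: sub; rewrite e => x Hx; left.
rewrite cntU //; first last.
- apply/seteqP; split => x // [[_ o1] [_ /= ex]]; subst x.
  by rewrite oi_sym in o1; exact: (oi_end o1).
- by apply: sub; rewrite e => x Hx; left; right.
- by apply: sub; rewrite e => x Hx; left; left.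
Qed.

Definition locfin Bs Rs := forall a c, finite_set ((Bs `|` Rs) `&` oi a c).

Lemma key Bs Rs K b r : disj Bs Rs -> locfin Bs Rs -> Bs b -> Rs r -> K < b -> K < r ->
  (cnt (Bs `&` oi b r) = cnt (Rs `&` oi b r)) <->
  (cnt (Bs `&` oi K r) + cnt (Rs `&` oi K b) =
     cnt (Bs `&` oi K b) + cnt (Rs `&` oi K r) + 1)%N.
Proof.
move=> dj lf Bb Rr Kb Kr.
have fX (X : set R) a c : X `<=` Bs `|` Rs -> finite_set (X `&` oi a c).
  by move=> XS; apply: (sub_finite_set _ (lf a c)) => x [Xx ox]; split => //; apply: XS.
have fB a c : finite_set (Bs `&` oi a c) by apply: fX => x Bx; left.
have fR a c : finite_set (Rs `&` oi a c) by apply: fX => x Rx; right.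
have e1 : Bs `&` [set b] = [set b] by apply/seteqP; split => x; [case|move=> /= ->].
have e2 : Rs `&` [set b] = set0.
  by apply/seteqP; split => x // [Rx /= e]; subst x; exact: (dj b).
have e3 : Rs `&` [set r] = [set r] by apply/seteqP; split => x; [case|move=> /= ->].
have e4 : Bs `&` [set r] = set0.
  by apply/seteqP; split => x // [Bx /= e]; subst x; exact: (dj r).
case: (ltgtP b r) => [br|rb|e]; last by subst r; exfalso; exact: (dj b).
- rewrite (@cnt_split Bs K b r) // (@cnt_split Rs K b r) // e1 e2 cnt1 cnt0.
  lia.
- rewrite (@cnt_split Bs K r b) // (@cnt_split Rs K r b) // e3 e4 cnt1 cnt0.
  rewrite (oi_sym b r); lia.
Qed.

Lemma det_sub Bs Rs b1 b2 r : disj Bs Rs -> locfin Bs Rs -> Bs b1 -> Bs b2 ->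
  potential_matches Bs Rs b1 r -> potential_matches Bs Rs b2 r ->
  potential_matches Bs Rs b1 `<=` potential_matches Bs Rs b2.
Proof.
move=> dj lf Bb1 Bb2 [Rr [M1 [nm1 M1b]]] [_ [M2 [nm2 M2b]]] r' [Rr' [M3 [nm3 M3b]]].
have fB a c : finite_set (Bs `&` oi a c).
  by apply: (sub_finite_set _ (lf a c)) => x [Xx ox]; split => //; left.
have fR a c : finite_set (Rs `&` oi a c).
  by apply: (sub_finite_set _ (lf a c)) => x [Xx ox]; split => //; right.
have [K [K1 K2 K3 K4]] := below b1 b2 r r'.
have h1 := @pm_balanced _ _ _ _ _ dj Bb1 Rr (fB _ _) (fR _ _) nm1 M1b.
have h2 := @pm_balanced _ _ _ _ _ dj Bb2 Rr (fB _ _) (fR _ _) nm2 M2b.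
have h3 := @pm_balanced _ _ _ _ _ dj Bb1 Rr' (fB _ _) (fR _ _) nm3 M3b.
move: h1 h2 h3; rewrite !(@key _ _ K _ _ dj lf) // => h1 h2 h3.
have : cnt (Bs `&` oi b2 r') = cnt (Rs `&` oi b2 r').
  rewrite (@key _ _ K _ _ dj lf Bb2 Rr') //; lia.
move=> bal.
have [M [nm Mb]] := @build _ _ _ _ _ dj Bb2 Rr' (lf _ _) erefl bal.
by split => //; exists M.
Qed.

Theorem det Bs Rs : disj Bs Rs -> locfin Bs Rs -> forall b1 b2, Bs b1 -> Bs b2 ->
  potential_matches Bs Rs b1 `&` potential_matches Bs Rs b2 !=set0 ->
  potential_matches Bs Rs b1 = potential_matches Bs Rs b2.
Proof.
move=> dj lf b1 b2 B1 B2 [r [P1 P2]].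
by apply/seteqP; split; [exact: (@det_sub _ _ b1 b2 r) | exact: (@det_sub _ _ b2 b1 r)].
Qed.

End Det.
Section Prob.
Context {R : realType}.
Local Open Scope ereal_scope.

Lemma pois_sum (m : R) : (0 <= m)%R ->
  \sum_(0 <= k <oo) (pois_pmf m k)%:E = 1.
Proof.
move=> m0.
rewrite [RHS](_ : _ = (expR (- m))%:E * (expR m)%:E); last first.
  by rewrite -EFinM expRN mulVf ?gt_eqF ?expR_gt0.
under eq_eseriesr.
  move=> n _; rewrite /pois_pmf -mulrA EFinM; over.
rewrite /= nneseriesZl/=; last first.
  by move=> n _; rewrite lee_fin divr_ge0// exprn_ge0.
congr *%E; rewrite expRE -EFin_lim; last first.
  rewrite /pseries/=; under eq_fun do rewrite mulrC.
  exact: is_cvg_series_exp_coeff.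
apply/congr_lim/funext => n/=; rewrite /pseries/= /series/= -sumEFin//.
by under eq_bigr do rewrite mulrC.
Qed.


Lemma esum1_infinite (A : set R) : infinite_set A -> \esum_(x in A) (1 : \bar R) = +oo.
Proof.
move=> iA; rewrite -(@infinite_card_dirac _ R R A iA).
apply: eq_esum => x Ax; rewrite diracE mem_set //.
Qed.

Lemma esum1_finite (A : set R) : finite_set A ->
  \esum_(x in A) (1 : \bar R) = ((#|` fset_set A|)%:R)%:E.
Proof. exact: finite_card_sum. Qed.


Lemma count_finite (X : set R) A k : npoints X A = (k%:R)%:E -> finite_set (X `&` A).
Proof.
move=> h; apply: contrapT => inf; move: h.
by rewrite /npoints esum1_infinite.
Qed.

Lemma count_pos (X : set R) A x : (X `&` A) x -> npoints X A <> ((0%N)%:R)%:E.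
Proof.
move=> XAx; rewrite /npoints.
have [fin|inf] := pselect (finite_set (X `&` A)); last by rewrite esum1_infinite.
rewrite esum1_finite // => h0; have /= := congr1 fine h0.
move/eqP; rewrite eqr_nat => /eqP h.
have := @cnt_pos _ _ x fin XAx; rewrite /cnt h.
by [].
Qed.

Context {d : measure_display} {T : measurableType d} (P : probability T R).

Lemma count_disj (X : T -> set R) A : trivIset setT (fun k => count_event X A k).
Proof.
move=> i j _ _ [w [hi hj]]; rewrite /count_event /= in hi hj.
move: hi; rewrite hj => h0; have /= := congr1 fine h0.
by move/eqP; rewrite eqr_nat => /eqP.
Qed.

Lemma fin_null (l : R) X A : poisson_process P l X -> (0 <= l)%R -> fin_borel A ->
  P (~` \bigcup_k count_event X A k) = 0.
Proof.
move=> [m1 [m2 _]] l0 fA.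
have mU : measurable (\bigcup_k count_event X A k).
  by apply: bigcupT_measurable => k; exact: m1.
rewrite probability_setC // measure_semi_bigcup //; last 2 first.
- by move=> k; exact: m1.
- exact: count_disj.
rewrite (@eq_eseriesr _ _ (fun k => (pois_pmf (l * fine (lebesgue_measure A)) k)%:E)); last first.
  by move=> k _; apply: m2.
rewrite pois_sum ?subee //.
apply: mulr_ge0 => //; apply: fine_ge0; exact: measure_ge0.
Qed.


Lemma pois0 (m : R) : pois_pmf m 0 = expR (- m).
Proof. by rewrite /pois_pmf expr0 mulr1 fact0 divr1. Qed.

Lemma count_events1 (X : T -> set R) A k :
  count_events X 1 (fun _ => A) (fun _ => k) = count_event X A k.
Proof.
apply/seteqP; split => w /=.
  by move=> /(_ 0%N erefl).
by move=> h i _.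
Qed.

Lemma pair_bound (lam mu : R) (Blue Red : T -> set R) A t :
  poisson_process P lam Blue -> poisson_process P mu Red ->
  indep_processes P Blue Red -> (0 <= lam)%R -> (0 <= mu)%R ->
  fin_borel A -> fine (lebesgue_measure A) = t -> (0 <= t)%R ->
  P (~` count_event Blue A 0 `&` ~` count_event Red A 0) <= ((lam * t) * (mu * t))%:E.
Proof.
move=> [mB [pB _]] [mR [pR _]] ind l0 m0 fA ft t0.
have ma := mB A 0%N fA; have mc := mR A 0%N fA.
have ea := pB A 0%N fA; have ec := pR A 0%N fA.
rewrite ft pois0 in ea; rewrite ft pois0 in ec.
have eac : P (count_event Blue A 0 `&` count_event Red A 0) =
    (expR (- (lam * t)) * expR (- (mu * t)))%:E.
  have h := ind 1%N 1%N (fun _ => A) (fun _ => A) (fun _ => 0%N) (fun _ => 0%N)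
    (fun _ _ => fA) (fun _ _ => fA).
  rewrite !count_events1 in h; rewrite h EFinM; congr (_ * _); [exact: ea|exact: ec].
rewrite -setCU probability_setC; last exact: measurableU.
rewrite measureUfinl //; last by rewrite ltey_eq fin_num_measure.
have ea' : (P : measure T R) (count_event Blue A 0) = (expR (- (lam * t)))%:E := ea.
have ec' : (P : measure T R) (count_event Red A 0) = (expR (- (mu * t)))%:E := ec.
have eac' : (P : measure T R) (count_event Blue A 0 `&` count_event Red A 0) =
    (expR (- (lam * t)) * expR (- (mu * t)))%:E := eac.
rewrite ea' ec' eac' -EFinD lee_fin.
set x := expR (- (lam * t)); set y := expR (- (mu * t)).
have x1 : (x <= 1)%R by rewrite /x expR_le1 oppr_le0 mulr_ge0.
have y1 : (y <= 1)%R by rewrite /y expR_le1 oppr_le0 mulr_ge0.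
have x2 : (1 - lam * t <= x)%R by have := expR_ge1Dx (- (lam * t)); rewrite /x; lra.
have y2 : (1 - mu * t <= y)%R by have := expR_ge1Dx (- (mu * t)); rewrite /y; lra.
have -> : (1 - (x + y - x * y) = (1 - x) * (1 - y))%R by ring.
by apply: ler_pM; lra.
Qed.


Definition Jv (n m j : nat) : set R :=
  `[(- n%:R + j%:R / m.+1%:R)%R, (- n%:R + j.+1%:R / m.+1%:R)%R]%classic.

Lemma Jv_lt (n m j : nat) : (- n%:R + j%:R / m.+1%:R < - n%:R + j.+1%:R / m.+1%:R :> R)%R.
Proof.
rewrite ltrD2l ltr_pM2r ?invr_gt0 ?ltr0Sn //.
by rewrite ltr_nat.
Qed.

Lemma Jv_len n m j : fin_borel (Jv n m j) /\
  fine (lebesgue_measure (Jv n m j)) = ((m.+1%:R)^-1)%R.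
Proof.
have lt := Jv_lt n m j.
split; last first.
  rewrite /Jv lebesgue_measure_itv /= lte_fin lt /=.
  have k0 : (m.+1%:R != 0 :> R)%R by rewrite pnatr_eq0.
  rewrite -(addn1 j) natrD; field.
  by move: k0; rewrite -addn1 natrD.
split; first exact: measurable_itv.
by rewrite /Jv lebesgue_measure_itv /= lte_fin lt /= ltry.
Qed.


Definition Ev (B Rd : T -> set R) n m j :=
  ~` count_event B (Jv n m j) 0 `&` ~` count_event Rd (Jv n m j) 0.
Definition Uv B Rd n m := \big[setU/set0]_(j < (2 * n * m.+1)%N) Ev B Rd n m j.
Definition Dv B Rd n := \bigcap_m Uv B Rd n m.

Lemma Ev_meas lam mu B Rd n m j : poisson_process P lam B -> poisson_process P mu Rd ->
  measurable (Ev B Rd n m j).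
Proof.
move=> [mB _] [mR _]; have [fJ _] := Jv_len n m j.
by apply: measurableI; apply: measurableC; [exact: mB|exact: mR].
Qed.
Arguments Ev_meas {lam mu B Rd n m j}.


Lemma Uv_meas lam mu B Rd n m : poisson_process P lam B -> poisson_process P mu Rd ->
  measurable (Uv B Rd n m).
Proof.
by move=> pB pR; apply: bigsetU_measurable => j _; exact: (Ev_meas pB pR).
Qed.
Arguments Uv_meas {lam mu B Rd n m}.


Lemma Dv_meas lam mu B Rd n : poisson_process P lam B -> poisson_process P mu Rd ->
  measurable (Dv B Rd n).
Proof.
by move=> pB pR; apply: bigcapT_measurable => m; exact: (Uv_meas pB pR).
Qed.
Arguments Dv_meas {lam mu B Rd n}.


Lemma U_bound lam mu B Rd n m : poisson_process P lam B -> poisson_process P mu Rd ->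
  indep_processes P B Rd -> (0 <= lam)%R -> (0 <= mu)%R ->
  P (Uv B Rd n m) <= ((2 * n * m.+1)%:R * ((lam * (m.+1%:R)^-1) * (mu * (m.+1%:R)^-1)))%:E.
Proof.
move=> pB pR ind l0 m0.
have := @content_subadditive _ _ _ P (Uv B Rd n m) (Ev B Rd n m) (2 * n * m.+1)%N
  (fun k _ => Ev_meas pB pR) (Uv_meas pB pR) (@subset_refl _ _).
move/le_trans; apply.
have hb (k : 'I_(2 * n * m.+1)) : true ->
    P (Ev B Rd n m k) <= ((lam * (m.+1%:R)^-1) * (mu * (m.+1%:R)^-1))%:E.
  move=> _; have [fJ lJ] := Jv_len n m k.
  apply: (@pair_bound lam mu B Rd _ _ pB pR ind l0 m0 fJ lJ).
  by rewrite invr_ge0.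
apply: (@le_trans _ _ (\sum_(k < (2 * n * m.+1)%N)
   ((lam * (m.+1%:R)^-1) * (mu * (m.+1%:R)^-1))%:E)%R).
  by apply: lee_sum => k _; exact: hb.
by rewrite sumEFin sumr_const card_ord mulr_natl.
Qed.


Lemma D_null lam mu B Rd n : poisson_process P lam B -> poisson_process P mu Rd ->
  indep_processes P B Rd -> (0 <= lam)%R -> (0 <= mu)%R ->
  P (Dv B Rd n) = 0.
Proof.
move=> pB pR ind l0 m0.
have mD := Dv_meas pB pR.
set C : R := (2 * n%:R * lam * mu)%R.
have C0 : (0 <= C)%R by rewrite /C !mulr_ge0.
have hb m : P (Dv B Rd n) <= (C * (m.+1%:R)^-1)%:E.
  apply: (le_trans (@le_measure _ _ _ P _ _ _ _ _)); first 3 last.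
  - apply: le_trans (U_bound _ _ _ _ n m pB pR ind l0 m0) _.
    rewrite lee_fin /C natrM natrM.
    have k0 : (m.+1%:R != 0 :> R)%R by rewrite pnatr_eq0.
    rewrite le_eqVlt; apply/orP; left; apply/eqP; field.
    by move: k0; rewrite -addn1 natrD.
  - exact: mem_set.
  - by apply: mem_set; exact: (Uv_meas pB pR).
  - by move=> w /(_ m I).
have P0 := measure_ge0 P (Dv B Rd n).
have fin : P (Dv B Rd n) \is a fin_num by rewrite fin_num_measure.
rewrite -(fineK fin); congr EFin; set r := fine _.
have r0 : (0 <= r)%R by rewrite /r fine_ge0.
have hr m : (r <= C * (m.+1%:R)^-1)%R by rewrite -lee_fin /r fineK.
apply/eqP; rewrite eq_le r0 andbT; apply/negP => /negP; rewrite -ltNge => rpos.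
set m := Num.trunc (C / r).
have h1 := truncnS_gt (C / r).
have h2 := hr m.
set k : R := (m.+1%:R)%R in h1 h2.
have k0 : (0 < k)%R by rewrite /k ltr0Sn.
have e1 : (C / r * r = C)%R by rewrite mulfVK // gt_eqF.
have e2 : (k^-1 * k = 1)%R by rewrite mulVf // gt_eqF.
have a1 : (r * k <= C)%R.
  by have := ler_wpM2r (ltW k0) h2; rewrite -mulrA e2 mulr1.
have a2 : (C < k * r)%R by rewrite -(ltr_pM2r rpos) e1 in h1.
lra.
Qed.


Lemma D_cover B Rd n w x : B w x -> Rd w x -> (- n%:R < x < n%:R)%R -> Dv B Rd n w.
Proof.
move=> Bx Rx /andP[h1 h2] m _.
set k : R := (m.+1%:R)%R.
have k0 : (0 < k)%R by rewrite /k ltr0Sn.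
set y : R := ((x + n%:R) * k)%R.
have y0 : (0 <= y)%R by apply: mulr_ge0; [lra|exact: ltW].
have /andP[hj1 hj2] := truncn_itv y0.
set j := Num.trunc y in hj1 hj2.
have jN : (j < 2 * n * m.+1)%N.
  rewrite truncn_lt_nat // natrM natrM -/k /y.
  have : (x + n%:R < 2%:R * n%:R)%R by lra.
  by rewrite -(ltr_pM2r k0).
apply: (@bigsetU_sup T j (2 * n * m.+1)%N (Ev B Rd n m) jN).
have Jx : Jv n m j x.
  rewrite /Jv /= in_itv /=; apply/andP; split.
    by rewrite -lerBrDl opprK addrC ler_pdivrMr // addrC.
  have : (x + n%:R <= j.+1%:R / k)%R by rewrite ler_pdivlMr //; exact: ltW.
  set c := (j.+1%:R / k)%R; lra.
split.
- by apply: (@count_pos (B w) (Jv n m j) x).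
- by apply: (@count_pos (Rd w) (Jv n m j) x).
Qed.

End Prob.

Lemma norm_bounds {R : realType} (x : R) : (- `|x| <= x <= `|x|)%R.
Proof. by rewrite -ler_norml. Qed.

Theorem lemma4p3 (d : measure_display) (T : measurableType d) (R : realType)
    (P : probability T R) (lam mu : R) (Blue Red : T -> set R) :
  0 < lam -> lam <= mu ->
  poisson_process P lam Blue -> poisson_process P mu Red ->
  indep_processes P Blue Red ->
  {ae P, forall w, forall b1 b2 : R, Blue w b1 -> Blue w b2 ->
     potential_matches (Blue w) (Red w) b1 `&`
       potential_matches (Blue w) (Red w) b2 !=set0 ->
     potential_matches (Blue w) (Red w) b1 =
       potential_matches (Blue w) (Red w) b2}.
Proof.
move=> l0 lm PB PR ind.
have l0' : 0 <= lam by exact: ltW.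
have m0' : 0 <= mu by lra.
pose In (n : nat) : set R := `](- n%:R), n%:R[%classic.
have fIn n : fin_borel (In n).
  split; first exact: measurable_itv.
  by rewrite /In lebesgue_measure_itv /=; case: ifP => _; rewrite ?ltry.
pose FB n := \bigcup_k count_event Blue (In n) k.
pose FR n := \bigcup_k count_event Red (In n) k.
pose N := \bigcup_n ((~` FB n `|` ~` FR n) `|` Dv Blue Red n).
have nN : P.-negligible N.
  apply: negligible_bigcup => n; apply: negligibleU; first apply: negligibleU.
  - apply/negligibleP.
      apply: measurableC; apply: bigcupT_measurable => k.
      by have [mB _] := PB; exact: mB.
    exact: (fin_null P lam Blue (In n) PB l0' (fIn n)).
  - apply/negligibleP.
      apply: measurableC; apply: bigcupT_measurable => k.
      by have [mR _] := PR; exact: mR.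
    exact: (fin_null P mu Red (In n) PR m0' (fIn n)).
  - apply/negligibleP; first exact: (Dv_meas P lam mu Blue Red n PB PR).
    exact: (D_null P lam mu Blue Red n PB PR ind l0' m0').
apply: (negligibleS _ nN) => w /= Hw.
apply: contrapT => Nw; apply: Hw.
have hB n : FB n w by apply: contrapT => h; apply: Nw; exists n => //; left; left.
have hR n : FR n w by apply: contrapT => h; apply: Nw; exists n => //; left; right.
have hD n : ~ Dv Blue Red n w by move=> h; apply: Nw; exists n => //; right.
apply: det.
- move=> x Bx Rx.
  set n := (Num.trunc `|x|).+1.
  apply: (hD n); apply: (D_cover _ _ _ _ _ Bx Rx).
  have := truncnS_gt `|x|; have := norm_bounds x.
  rewrite -/n => /andP[h1 h2] h3; apply/andP; split; lra.
- move=> a c.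
  set n := (Num.trunc (`|a| + `|c|)).+1.
  have [k _ Bk] := hB n; have [k' _ Rk] := hR n.
  have f1 := count_finite _ _ _ Bk; have f2 := count_finite _ _ _ Rk.
  apply: (sub_finite_set (B := (Blue w `&` In n) `|` (Red w `&` In n))).
    have oin z : oi a c z -> In n z.
      rewrite /oi /= betweenP /In /= in_itv /= => hz.
      have := truncnS_gt (`|a| + `|c|); have := norm_bounds a; have := norm_bounds c.
      rewrite -/n => /andP[h1 h2] /andP[h3 h4] h5.
      by case: hz => /andP[h6 h7]; apply/andP; split; lra.
    move=> z [[Bz|Rz] oz]; rewrite /setU /=.
    + by left; split => //; apply: oin.
    + by right; split => //; apply: oin.
  by rewrite finite_setU.
Qed.
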